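(* Let $G \in \mathcal{C}_3$ be a digraph with at least one arc. Then in every $\vec{\chi}(G)$-dicolouring of $G$ there is at least one monochromatic arc, i.e. an arc both of whose endpoints lie in the same colour class.
   Context: All digraphs are finite and simple: no loops, no multiple arcs, and for two distinct vertices $u,v$ at most one of the arcs $uv$, $vu$ is present. A $k$-dicolouring of a digraph $D$ is a partition of $V(D)$ into $k$ sets $V_1,\dots,V_k$ (some possibly empty) such that each induced subdigraph $D[V_i]$ is acyclic (contains no directed cycle). The dichromatic number $\vec{\chi}(D)$ is the smallest $k$ such that $D$ admits a $k$-dicolouring. $TT_3$ denotes the transitive tournament on 3 vertices (a triangle oriented acyclically); a directed triangle is a directed cycle of length 3. $\mathcal{C}_3$ is the class of digraphs that contain no $TT_3$ as a subdigraph and contain no induced directed cycle of length at least $4$. *)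

(* Defs.v *)
From mathcomp Require Import all_boot.
Set Implicit Arguments. Unset Strict Implicit. Unset Printing Implicit Defensive.

Definition simple_digraph (V : finType) (arc : rel V) : Prop :=
  (forall v, ~~ arc v v) /\ (forall u v, arc u v -> ~~ arc v u).

Definition dicycle (V : finType) (arc : rel V) (s : seq V) : Prop :=
  [/\ 2 <= size s, uniq s & cycle arc s].

Definition acyclic_on (V : finType) (arc : rel V) (A : {set V}) : Prop :=
  forall s, dicycle arc s -> ~ {subset s <= A}.

Definition dicolouring (V : finType) (arc : rel V) (k : nat) (f : V -> 'I_k) : Prop :=
  forall i : 'I_k, acyclic_on arc [set v | f v == i].

Definition dichromatic_number (V : finType) (arc : rel V) (k : nat) : Prop :=
  (exists f : V -> 'I_k, dicolouring arc f) /\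
  (forall k', k' < k -> forall f : V -> 'I_k', ~ dicolouring arc f).

Definition has_TT3 (V : finType) (arc : rel V) : Prop :=
  exists a b c : V, [/\ arc a b, arc b c & arc a c].

Definition induced_dicycle (V : finType) (arc : rel V) (s : seq V) : Prop :=
  dicycle arc s /\
  (forall u v, u \in s -> v \in s -> arc u v -> v = next s u).

Definition in_C3 (V : finType) (arc : rel V) : Prop :=
  ~ has_TT3 arc /\
  (forall s, 4 <= size s -> ~ induced_dicycle arc s).

(* Main.v *)
Require Import Defs.
From mathcomp Require Import all_boot zify.
Set Implicit Arguments. Unset Strict Implicit.

Lemma shorten (V : finType) (arc : rel V) : simple_digraph arc ->
  forall s, dicycle arc s -> exists t,
    [/\ induced_dicycle arc t, {subset t <= s} & size t <= size s].
Proof.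
move=> [noloop asym].
suff H: forall n s, size s <= n -> dicycle arc s -> exists t,
    [/\ induced_dicycle arc t, {subset t <= s} & size t <= size s].
  by move=> s; apply: (H (size s)).
elim=> [|n IH] s Hs Hc.
  by case: Hc => sz _ _; move: (leq_trans sz Hs).
case: (boolP [forall u, forall v, (u \in s) ==> (v \in s) ==> arc u v ==> (v == next s u)]) => Hall.
  exists s; split => //; split => // u v us vs a.
  by move: (forallP Hall u) => /forallP/(_ v); rewrite us vs a => /eqP.
move: Hall; rewrite negb_forall => /existsP[u]; rewrite negb_forall => /existsP[v].
rewrite !negb_imply => /and4P[us vs a nv].
case: Hc => [sz un cy].
case: (rot_to us) => i s' Hrot.
have un': uniq (u :: s') by rewrite -Hrot rot_uniq.
have cy': cycle arc (u :: s') by rewrite -Hrot rot_cycle.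
have mem': forall x, (x \in u :: s') = (x \in s) by move=> x; rewrite -Hrot mem_rot.
have nx: next (u :: s') u = next s u by rewrite -Hrot (next_rot _ un).
have sz': size (u :: s') = size s by rewrite -Hrot size_rot.
case: s' Hrot un' cy' mem' nx sz' => [|w r] Hrot un' cy' mem' nx sz'.
  by rewrite -sz' in sz.
have nw: next (u :: w :: r) u = w by rewrite /= eqxx.
have vu: v != u by apply/eqP => E; move: (noloop u); rewrite -{2}E a.
have vw: v != w by apply/eqP => E; move: nv; rewrite -nx nw E eqxx.
have vr: v \in r by move: vs; rewrite -mem' !inE (negbTE vu) (negbTE vw).
case/splitPr: vr un' cy' mem' sz' Hrot => r1 r2 un' cy' mem' sz' Hrot.
have [t [Hti Hts Htz]] : exists t,
    [/\ induced_dicycle arc t, {subset t <= v :: rcons r2 u} & size t <= size (v :: rcons r2 u)].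
  apply: IH.
    move: Hs; rewrite -sz' /= size_cat /= size_rcons; lia.
  split.
  - by rewrite /= size_rcons.
  - move: un'; rewrite /= rcons_uniq !cat_uniq /= !mem_cat !inE !negb_or.
    move=> /andP[/andP[_]]; rewrite mem_cat inE !negb_or => /and3P[_ _ Hu] /and5P[_ _ _ Hv Hr].
    by rewrite mem_rcons inE negb_or vu Hv Hu Hr.
  - move: cy'; rewrite /= rcons_path cat_path last_cat /= => /and3P[_ /andP[_ /andP[_ P]] L].
    by rewrite rcons_path rcons_path P L last_rcons a.
exists t; split => //.
  move=> x /Hts; rewrite -mem' !inE mem_rcons !inE mem_cat !inE => /orP[->|/orP[->|->]];
   rewrite ?orbT //.
move: Htz; rewrite -sz' /= size_rcons size_cat /=; lia.
Qed.

Lemma acyclic_sub (V : finType) (arc : rel V) (A B : {set V}) :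
  acyclic_on arc A -> {subset B <= A} -> acyclic_on arc B.
Proof. by move=> HA sub s Hs Hsub; apply: (HA s Hs) => x /Hsub /sub. Qed.

Lemma bip (V : finType) (arc : rel V) (k : nat) (f : V -> 'I_k) :
  simple_digraph arc -> in_C3 arc -> dicolouring arc f ->
  (forall u v, arc u v -> f u != f v) ->
  forall i j : 'I_k, acyclic_on arc [set v | (f v == i) || (f v == j)].
Proof.
move=> simp [_ noind] df nm i j.
case: (eqVneq i j) => [<-|ij].
  by eapply acyclic_sub; [exact: (df i)|] => x; rewrite !inE orbb.
move=> s Hs Hsub.
have [t [Hti Hts Htz]] := shorten simp Hs.
have tA : {subset t <= [set v | (f v == i) || (f v == j)]} by move=> x /Hts /Hsub.
have : 4 <= size t.
  case: Hti => [[sz _ cy] _].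
  case: t tA sz cy {Hts Htz} => [|a [|b [|c [|d t]]]] //= tA _.
    case: simp => _ asym; rewrite andbT => /andP[ab ba].
    by move: (asym _ _ ab); rewrite ba.
  rewrite andbT => /and3P[ab bc ca].
  move: (nm _ _ ab) (nm _ _ bc) (nm _ _ ca).
  have := tA a; have := tA b; have := tA c; rewrite !inE !eqxx !orbT.
  move=> /(_ isT) /orP[]/eqP-> /(_ isT) /orP[]/eqP-> /(_ isT) /orP[]/eqP->;
    by rewrite ?eqxx.
by move=> h; apply: (noind t h).
Qed.

Theorem mainTheorem2 (V : finType) (arc : rel V) :
  simple_digraph arc ->
  in_C3 arc ->
  (exists u v, arc u v) ->
  forall (k : nat), dichromatic_number arc k ->
  forall f : V -> 'I_k, dicolouring arc f ->
  exists u v, arc u v /\ f u = f v.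
Proof.
move=> simp C3 [u0 [v0 a0]] k [_ mink] f df.
case: (boolP [exists u, exists v, arc u v && (f u == f v)]).
  by move=> /existsP[u /existsP[v /andP[a /eqP e]]]; exists u, v.
move=> H.
have nm : forall u v, arc u v -> f u != f v.
  move=> u v a; apply/negP => e; move/negP: H; apply.
  by apply/existsP; exists u; apply/existsP; exists v; rewrite a e.
exfalso.
case: k mink f df nm {H} => [|[|k]] mink f df nm.
- by case: (f u0).
- by move: (nm _ _ a0); rewrite (ord1 (f u0)) (ord1 (f v0)).
apply: (mink k.+1 (ltnSn _) (fun v => inord (minn (f v) k))).
move=> c; eapply acyclic_sub; [exact: (bip simp C3 df nm (i:=widen_ord (leqnSn _) c) (j:=ord_max))|].
move=> x; rewrite !inE => /eqP <-.
have := ltn_ord (f x).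
rewrite -!(inj_eq val_inj) /= inordK; last by rewrite ltnS geq_minr.
case: (leqP k (f x)) => h hx.
  by apply/orP; lia.
by rewrite eqxx.
Qed.
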